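(* Let $p_1,\dots,p_n$ be distinct primes. Let $X_1=\mathbb Z/(p_1)$ with the solution $r_1$ given by $\sigma_x(y)=y+1$ (any indecomposable solution on $p_1$ points may be used). Inductively, for $2\le j\le n$, let $X_j=\mathbb Z/(p_j)\times X_{j-1}$ and define $r_j((a,x),(b,y))=(\sigma_{(a,x)}(b,y),\sigma^{-1}_{\sigma_{(a,x)}(b,y)}(a,x))$, where $\sigma_{(a,x)}(b,y)=(b+\delta_{x,\sigma_x(y)},\ \sigma_x(y))$, $\sigma_x$ being the maps of $(X_{j-1},r_{j-1})$ and $\delta$ the Kronecker delta. Then for every $2\le j\le n$: $(X_j,r_j)$ is an indecomposable solution of the YBE with $|X_j|=p_1\cdots p_j$; $\mathrm{Ret}(X_j,r_j)\cong(X_{j-1},r_{j-1})$ (via $\overline{(a,x)}\mapsto x$); and $\mathcal G(X_j,r_j)\cong (\mathbb Z/(p_j))^{|X_{j-1}|}\rtimes_\alpha\mathcal G(X_{j-1},r_{j-1})$ as left braces, where $\alpha(g)((a_x)_{x\in X_{j-1}})=(a_{g^{-1}(x)})_{x\in X_{j-1}}$. Consequently $(X_n,r_n)$ is an indecomposable multipermutation solution of cardinality $p_1\cdots p_n$ and multipermutation level exactly $n$, with $|\mathcal G(X_n,r_n)|=p_1p_2^{p_1}p_3^{p_1p_2}\cdots p_n^{p_1\cdots p_{n-1}}$.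
   Context: A solution of the Yang–Baxter equation (YBE) is a pair $(X,r)$, where $X$ is a non-empty set and $r\colon X\times X\to X\times X$, written $r(x,y)=(\sigma_x(y),\gamma_y(x))$, satisfies: $r^2=\mathrm{id}$; all $\sigma_x,\gamma_y$ are bijections of $X$; and $r_{12}r_{23}r_{12}=r_{23}r_{12}r_{23}$ on $X^3$, where $r_{12}=r\times\mathrm{id}_X$, $r_{23}=\mathrm{id}_X\times r$. Equivalently, for bijections $\sigma_x$, the map $r(x,y)=(\sigma_x(y),\sigma^{-1}_{\sigma_x(y)}(x))$ is a solution iff $\sigma_x\sigma_{\sigma_x^{-1}(y)}=\sigma_y\sigma_{\sigma_y^{-1}(x)}$ for all $x,y$. $\mathcal G(X,r)=\langle\sigma_x:x\in X\rangle\le\mathrm{Sym}_X$; indecomposable means $\mathcal G(X,r)$ is transitive on $X$. Retract: $x\sim y\iff\sigma_x=\sigma_y$, inducing a solution $\mathrm{Ret}(X,r)$ on $X/{\sim}$; multipermutation level = least $k$ with $|\mathrm{Ret}^k(X,r)|=1$. A left brace is a set $B$ with $+$ and $\circ$ such that $(B,+)$ is abelian, $(B,\circ)$ is a group and $a\circ(b+c)+a=a\circ b+a\circ c$; $\lambda_a(b)=-a+a\circ b$; a trivial brace has $a\circ b=a+b$ (here $\mathbb Z/(p_j)^{m}$ is regarded as a trivial brace). For left braces $I,L$ and a group homomorphism $\alpha\colon(L,\circ)\to\mathrm{Aut}(I,+,\circ)$, the semidirect product $I\rtimes_\alpha L$ is the left brace with multiplicative group the semidirect product via $\alpha$ and componentwise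 addition. The brace structure on $\mathcal G(X,r)$: the structure group $G(X,r)=\langle x\in X\mid xy=\sigma_x(y)\gamma_y(x)\rangle$ is a left brace with additive group free abelian on $X$ and $\lambda_x(y)=\sigma_x(y)$; $x\mapsto\sigma_x$ extends to a group epimorphism $\phi\colon G(X,r)\to\mathcal G(X,r)$ with kernel $\{a:ab=a+b\ \forall b\}$, and $\mathcal G(X,r)$ carries the unique left brace structure making $\phi$ a brace homomorphism. *)

(* Defs.v *)
From mathcomp Require Import all_boot all_order all_algebra all_fingroup.
Set Implicit Arguments. Unset Strict Implicit. Unset Printing Implicit Defensive.
Import GRing.Theory.
Local Open Scope ring_scope.

Section Generic.
Variable X : finType.
Implicit Types (r : X * X -> X * X).

Definition sig_of r (x y : X) : X := (r (x, y)).1.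
Definition gam_of r (y x : X) : X := (r (x, y)).2.

Definition r12 r (t : X * X * X) : X * X * X :=
  ((r (t.1.1, t.1.2)).1, (r (t.1.1, t.1.2)).2, t.2).
Definition r23 r (t : X * X * X) : X * X * X :=
  (t.1.1, (r (t.1.2, t.2)).1, (r (t.1.2, t.2)).2).

Definition is_solution r : Prop :=
  [/\ forall z, r (r z) = z,
      forall x, bijective (sig_of r x),
      forall y, bijective (gam_of r y)
    & forall t, r12 r (r23 r (r12 r t)) = r23 r (r12 r (r23 r t))].

Definition r_of (s : X -> X -> X) (t : X * X) : X * X :=
  (s t.1 t.2, finv (s (s t.1 t.2)) t.1).

(* the permutation equal to f (identity if f is not bijective) *)
Definition perm_of (f : X -> X) : {perm X} :=
  odflt 1%g [pick g : {perm X} | [forall y, g y == f y]].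

Definition sigp r (x : X) : {perm X} := perm_of (sig_of r x).

Definition Gcal r : {group {perm X}} := (<<[set sigp r x | x : X]>>)%G.

Definition indecomposable r : Prop := [transitive Gcal r, on [set: X] | 'P].

(* ret_rel r k : the equivalence on X whose classes are the points of Ret^k(X,r):
   x ~_0 y iff x = y;  x ~_{k+1} y iff sigma_[x] = sigma_[y] in Ret^k(X,r),
   i.e. sigma_x(z) ~_k sigma_y(z) for all z. *)
Fixpoint ret_rel r (k : nat) : rel X :=
  match k with
  | 0 => fun x y => x == y
  | k'.+1 => fun x y => [forall z, ret_rel r k' (sig_of r x z) (sig_of r y z)]
  end.

Definition ret_trivial r (k : nat) : Prop := forall x y, ret_rel r k x y.
Definition multiperm r : Prop := exists k, ret_trivial r k.
Definition mp_level r (n : nat) : Prop :=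
  ret_trivial r n /\ forall k, (k < n)%N -> ~ ret_trivial r k.

End Generic.

(* Ret(X,r) is isomorphic to (Y,r') via the map induced by f : X -> Y,
   i.e. f is onto, its fibres are exactly the classes x ~ y <-> sigma_x = sigma_y,
   and the induced bijection X/~ -> Y maps the retract solution to r'. *)
Definition ret_iso_via (X Y : finType) (r : X * X -> X * X) (r' : Y * Y -> Y * Y)
    (f : X -> Y) : Prop :=
  [/\ forall y, exists x, f x = y,
      forall u v, f u = f v <-> sig_of r u =1 sig_of r v
    & forall u v, (f (r (u, v)).1, f (r (u, v)).2) = r' (f u, f v)].

(* Z^X : the additive group of the structure group (free abelian on X) *)
Definition ebasis (X : finType) (x : X) : {ffun X -> int} :=
  [ffun y => ((x == y) : nat)%:Z].

Definition pact (X : finType) (R : Type) (g : {perm X}) (a : {ffun X -> R}) : {ffun X -> R} :=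
  [ffun x => a ((g^-1)%g x)].

(* lam : Z^X -> Sym_X is the lambda-map of the structure group G(X,r)
   (= the epimorphism phi : G(X,r) -> \mathcal G(X,r)):
   lam(x) = sigma_x and lam(a o b) = lam(a) lam(b) with a o b = a + lam_a(b).
   (mathcomp's product g * h means "first g, then h".) *)
Definition is_lam (X : finType) (r : X * X -> X * X)
    (lam : {ffun X -> int} -> {perm X}) : Prop :=
  (forall x, lam (ebasis x) = sigp r x) /\
  (forall a b, lam (a + pact (lam a) b) = (lam b * lam a)%g).

Fixpoint Xt (p : nat -> nat) (j : nat) {struct j} : finType :=
  match j with
  | 0 => 'Z_(p 1)
  | j'.+1 => match j' with
             | 0 => 'Z_(p 1)
             | _.+1 => ('Z_(p j) * Xt p j')%type
             end
  end.

Fixpoint sig (p : nat -> nat) (j : nat) {struct j} : Xt p j -> Xt p j -> Xt p j :=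
  match j as j0 return Xt p j0 -> Xt p j0 -> Xt p j0 with
  | 0 => fun (x y : 'Z_(p 1)) => (y + 1 : 'Z_(p 1))
  | j'.+1 =>
    (match j' as k return (Xt p k -> Xt p k -> Xt p k) ->
                          Xt p k.+1 -> Xt p k.+1 -> Xt p k.+1 with
     | 0 => fun _ (x y : 'Z_(p 1)) => (y + 1 : 'Z_(p 1))
     | k'.+1 => fun (f : Xt p k'.+1 -> Xt p k'.+1 -> Xt p k'.+1)
                    (u v : ('Z_(p k'.+2) * Xt p k'.+1)%type) =>
                  ((v.1 + ((u.2 == f u.2 v.2) : nat)%:R : 'Z_(p k'.+2)), f u.2 v.2)
     end) (@sig p j')
  end.

Arguments sig p j : clear implicits.

Definition rX (p : nat -> nat) (j : nat) := r_of (sig p j).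
Arguments rX p j : clear implicits.

Definition proj (p : nat -> nat) (k : nat) (u : Xt p k.+2) : Xt p k.+1 := u.2.
Arguments proj p k u : clear implicits.

(* multiplication of the semidirect product (Z/(q))^{Y} x|_alpha G, with
   alpha(g)((a_y)_y) = (a_{g^{-1}(y)})_y ; the group law of G(Y) is composition *)
Definition sd_mul (Y : finType) (q : nat) (u v : {ffun Y -> 'Z_q} * {perm Y}) :=
  (u.1 + pact u.2 v.1, (v.2 * u.2)%g).

(* \mathcal G(X_{k+2}, r_{k+2}) ~= (Z/(p_{k+2}))^{|X_{k+1}|} x|_alpha \mathcal G(X_{k+1}, r_{k+1})
   as left braces.  The brace on \mathcal G is the one making lam (= phi) a brace
   homomorphism: lam a + lam b = lam (a + b), and its product is composition. *)
Definition brace_iso_sd (p : nat -> nat) (k : nat) : Prop :=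
  exists (lamX : {ffun Xt p k.+2 -> int} -> {perm Xt p k.+2})
         (lamY : {ffun Xt p k.+1 -> int} -> {perm Xt p k.+1}),
  [/\ is_lam (rX p k.+2) lamX, is_lam (rX p k.+1) lamY &
  exists F : {perm Xt p k.+2} -> {ffun Xt p k.+1 -> 'Z_(p k.+2)} * {perm Xt p k.+1},
  [/\ {in Gcal (rX p k.+2) &, injective F},
      forall g, g \in Gcal (rX p k.+2) -> (F g).2 \in Gcal (rX p k.+1),
      forall i l, l \in Gcal (rX p k.+1) ->
        exists2 g, g \in Gcal (rX p k.+2) & F g = (i, l),
      {in Gcal (rX p k.+2) &, forall g h, F (h * g)%g = sd_mul (F g) (F h)}
    & forall a b c d, lamY c = (F (lamX a)).2 -> lamY d = (F (lamX b)).2 ->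
        F (lamX (a + b)) = ((F (lamX a)).1 + (F (lamX b)).1, lamY (c + d))]].

(* Main.v *)
Require Import Defs.
From mathcomp Require Import all_boot all_order all_algebra all_fingroup.
From mathcomp Require Import zify.
Set Implicit Arguments. Unset Strict Implicit. Unset Printing Implicit Defensive.
Import Order.TTheory GRing.Theory Num.Theory.

Section GenSol.
Variable T : finType.
Variable s : T -> T -> T.
Hypothesis sinj : forall x, injective (s x).

Definition cyc := forall x y z, s (s x y) (s (finv (s (s x y)) x) z) = s x (s y z).

Lemma r_invol z : r_of s (r_of s z) = z.
Proof.
case: z => x y; rewrite /r_of /=.
by rewrite f_finv // finv_f.
Qed.

Lemma r12_invol t : r12 (r_of s) (r12 (r_of s) t) = t.
Proof.
case: t => [[x y] z]; rewrite /r12 /=.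
by rewrite /r_of /= f_finv // finv_f.
Qed.

Lemma r23_invol t : r23 (r_of s) (r23 (r_of s) t) = t.
Proof.
case: t => [[x y] z]; rewrite /r23 /=.
by rewrite /r_of /= f_finv // finv_f.
Qed.

Lemma braid_of_cyc : cyc -> forall t,
  r12 (r_of s) (r23 (r_of s) (r12 (r_of s) t)) = r23 (r_of s) (r12 (r_of s) (r23 (r_of s) t)).
Proof.
move=> hc.
pose V t := (r12 (r_of s)) ((r23 (r_of s)) ((r12 (r_of s)) t)); pose W t := (r23 (r_of s)) ((r12 (r_of s)) ((r23 (r_of s)) t)).
have V2 t : V (V t) = t by rewrite /V !(r12_invol, r23_invol).
have W2 t : W (W t) = t by rewrite /W !(r12_invol, r23_invol).
have p1 t : (V t).1.1 = (W t).1.1.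
  by case: t => [[x y] z]; rewrite /V /W /r12 /r23 /r_of /= hc.
pose Q t := V (W t).
have Q1 t : (Q t).1.1 = t.1.1 by rewrite /Q p1 W2.
have Qi1 t : (W (V t)).1.1 = t.1.1 by rewrite -p1 V2.
have c12 t : (r12 (r_of s)) (Q ((r12 (r_of s)) t)) = W (V t).
  by rewrite /Q /V /W !(r12_invol, r23_invol).
have c23 t : (r23 (r_of s)) (Q ((r23 (r_of s)) t)) = W (V t).
  by rewrite /Q /V /W !(r12_invol, r23_invol).
have Q2 t : (Q t).1.2 = t.1.2.
  have := Qi1 ((r12 (r_of s)) t); rewrite -c12 r12_invol.
  move=> h; have e := Q1 t; move: h e; case: (Q t) => [[a b] c].
  case: t => [[x y] z]; rewrite /r12 /r_of /= => h e; subst a.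
  exact: sinj h.
have QWV t : Q (W (V t)) = t by rewrite /Q W2 V2.
have Qi2 t : (W (V t)).1.2 = t.1.2.
  by rewrite -{2}(QWV t) Q2.
have Q3 t : (Q t).2 = t.2.
  have := Qi2 ((r23 (r_of s)) t); rewrite -c23 r23_invol.
  move=> h; have e := Q2 t; move: h e; case: (Q t) => [[a b] c].
  case: t => [[x y] z]; rewrite /r23 /r_of /= => h e; subst b.
  exact: sinj h.
have QE t : Q t = t.
  by case: t Q1 Q2 Q3 => [[x y] z] Q1' Q2' Q3'; move: (Q1' (x,y,z)) (Q2' (x,y,z)) (Q3' (x,y,z));
     case: (Q (x,y,z)) => [[a b] c] /= -> -> ->.
move=> t.
by have := QE (W t); rewrite /Q W2.
Qed.

Lemma is_solution_of : cyc -> (forall y, injective (fun x => finv (s (s x y)) x)) ->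
  is_solution (r_of s).
Proof.
move=> hc hg; split.
- exact: r_invol.
- by move=> x; apply: injF_bij; exact: sinj.
- by move=> y; apply: injF_bij; exact: hg.
- exact: braid_of_cyc.
Qed.

End GenSol.

Section GenLam.
Local Open Scope ring_scope.
Variable T : finType.
Variable s : T -> T -> T.
Hypothesis sinj : forall x, injective (s x).

Lemma perm_ofE (f : T -> T) : injective f -> Defs.perm_of f =1 f.
Proof.
move=> fi; rewrite /Defs.perm_of; case: pickP => [g /forallP h|h] /=.
  by move=> x; apply/eqP.
have := h (perm fi); move/negP; case; apply/forallP => y; by rewrite permE.
Qed.

Lemma sigpE x : sigp (r_of s) x =1 s x.
Proof. by move=> y; rewrite /sigp perm_ofE //; exact: sinj. Qed.

Lemma pact0 (g : {perm T}) : pact g (0 : {ffun T -> int}) = 0.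
Proof. by apply/ffunP => y; rewrite !ffunE. Qed.

Lemma pact_e (g : {perm T}) x : pact g (ebasis x) = ebasis (g x).
Proof.
apply/ffunP => y; rewrite !ffunE; congr (Posz (nat_of_bool _)).
apply/eqP/eqP => [->|<-]; by rewrite ?permKV ?permK.
Qed.

Lemma pactD (g : {perm T}) (a b : {ffun T -> int}) : pact g (a + b) = pact g a + pact g b.
Proof. by apply/ffunP => y; rewrite !ffunE. Qed.

Variable lam : {ffun T -> int} -> {perm T}.
Hypothesis hl : is_lam (r_of s) lam.

Lemma lam0 : lam 0 = 1%g.
Proof.
case: hl => _ hc; have := hc 0 0; rewrite pact0 addr0 => h.
by apply: (mulgI (lam 0)); rewrite mulg1 -h.
Qed.

Lemma lam_step a x : lam (a + ebasis x) = (sigp (r_of s) ((lam a)^-1 x) * lam a)%g.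
Proof.
case: hl => he hc; rewrite -he -(hc a); congr lam; congr (_ + _).
by rewrite pact_e permKV.
Qed.

Lemma Gcal_lam g : g \in Gcal (r_of s) -> exists a, lam a = g.
Proof.
move/gen_prodgP => [n [c hc ->]].
elim: n c hc => [|n IH] c hc.
  by exists 0; rewrite big_ord0 lam0.
rewrite big_ord_recr /=.
have [a ha] := IH (fun i => c (widen_ord (leqnSn n) i)) (fun i => hc _).
have /imsetP [x _ ->] := hc ord_max.
case: hl => he hcc.
exists (ebasis x + pact (lam (ebasis x)) a).
by rewrite hcc ha he.
Qed.

Lemma lam_in_nonneg (n : nat) (a : {ffun T -> int}) :
  (forall y, 0 <= a y) -> (\sum_y `|a y|%N)%N = n -> lam a \in Gcal (r_of s).
Proof.
elim: n a => [|n IH] a ha hs.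
  have -> : a = 0.
    apply/ffunP => y; rewrite ffunE.
    have : (`|a y| <= \sum_y0 `|a y0|)%N.
      by rewrite (bigD1 y) //= leq_addr.
    rewrite hs leqn0 => /eqP h; apply/eqP; rewrite -absz_eq0; exact/eqP.
  by rewrite lam0 group1.
have [y hy] : exists y, 0 < a y.
  apply/existsP; apply: contraTT isT => /existsPn h0.
  have : (\sum_y `|a y|)%N = 0%N.
    apply/eqP; rewrite sum_nat_eq0; apply/forallP => y; apply/implyP => _.
    have := h0 y; rewrite -leNgt => h1.
    by rewrite absz_eq0 eq_le h1 ha.
  by rewrite hs.
set a' := a - ebasis y.
have -> : a = a' + ebasis y by rewrite subrK.
rewrite lam_step groupM // ?groupV; last first.
  apply: IH.
    move=> z; rewrite /a' !ffunE; case: eqP => [<-|_]; last by rewrite subr0.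
    by rewrite subr_ge0.
  have [m hm] : exists m, a y = Posz m.+1.
    by move: hy; case: (a y) => [[|m]|m] //= _; exists m.
  have e1 := hs; rewrite (bigD1 y) //= in e1.
  rewrite (bigD1 y) //=.
  have -> : (\sum_(z | z != y) `|a' z|)%N = (\sum_(z | z != y) `|a z|)%N.
    by apply: eq_bigr => z hz; rewrite /a' !ffunE eq_sym (negPf hz) subr0.
  have -> : `|a' y|%N = m.
    by rewrite /a' !ffunE eqxx hm -addn1 PoszD addrK.
  by move: e1; rewrite hm /=; lia.
by apply: mem_gen; apply/imsetP; exists ((lam a')^-1 y)%g.
Qed.

Definition periodic (M : nat) := forall a b, lam (a + b *+ M) = lam a.

Lemma lam_in_G (M : nat) : (0 < M)%N -> periodic M -> forall a, lam a \in Gcal (r_of s).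
Proof.
move=> hM hp a.
pose K := (\sum_y `|a y|)%N.
rewrite -(hp a [ffun _ => Posz K]).
apply: (@lam_in_nonneg _ (a + [ffun _ => Posz K] *+ M) _ (erefl _)) => y.
rewrite ffunE ffunMnE ffunE.
have : (`|a y| <= K)%N by rewrite /K (bigD1 y) //= leq_addr.
clearbody K; move: (a y) => x h; nia.
Qed.

Lemma lam_in_Gcal g M : (0 < M)%N -> periodic M ->
  (g \in Gcal (r_of s)) <-> exists a, lam a = g.
Proof.
move=> hM hp; split; first exact: Gcal_lam.
by move=> [a <-]; apply: lam_in_G hp _.
Qed.

End GenLam.

Lemma trans_of (T : finType) (G : {group {perm T}}) (t0 : T) :
  (forall x y, exists2 g, g \in G & g x = y) -> [transitive G, on [set: T] | 'P].
Proof.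
move=> h; apply/imsetP; exists t0; first by rewrite inE.
apply/setP => y; rewrite inE; symmetry; apply/orbitP.
by have [g hg e] := h t0 y; exists g => //; rewrite apermE.
Qed.

Lemma trans_get (T : finType) (G : {group {perm T}}) :
  [transitive G, on [set: T] | 'P] -> forall x y, exists2 g, g \in G & g x = y.
Proof.
move=> h x y; have e := atransP h x (in_setT x).
have : y \in orbit 'P G x by rewrite e inE.
by case/orbitP => g hg <-; exists g.
Qed.

Unset Implicit Arguments. Set Strict Implicit.

Definition sX (Y : finType) (sY : Y -> Y -> Y) (q : nat) (u v : ('Z_q * Y)%type) : ('Z_q * Y)%type :=
  (v.1 + ((u.2 == sY u.2 v.2) : nat)%:R, sY u.2 v.2)%R.

Section Layer.
Local Open Scope ring_scope.
Variable Y : finType.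
Variable sY : Y -> Y -> Y.
Variable q : nat.
Hypothesis hq : (1 < q)%N.
Hypothesis sYinj : forall x, injective (sY x).

Local Notation X := ('Z_q * Y)%type.
Local Notation sL := (@sX Y sY q).
Local Notation dl x w := (((x == w) : nat)%:R : 'Z_q).

Lemma sXE u v : sL u v = (v.1 + dl u.2 (sY u.2 v.2), sY u.2 v.2).
Proof. by []. Qed.

Lemma sXinj u : injective (sL u).
Proof.
case=> b y [b' y'] h; move: (congr1 fst h) (congr1 snd h) => /= h1 h2.
have e := sYinj _ _ _ h2; subst y'.
by rewrite (addIr _ h1).
Qed.

Lemma finvX w t : finv (sL w) t = (t.1 - dl w.2 t.2, finv (sY w.2) t.2).
Proof.
apply: (sXinj w); rewrite f_finv; last exact: sXinj.
rewrite sXE /= f_finv //.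
by case: t => a x /=; rewrite subrK.
Qed.

Lemma cycX : cyc sY -> cyc sL.
Proof.
move=> hc [a x] [b y] [c z].
rewrite [sL (_,_) (_,_)]sXE /= finvX /= !sXE /=.
rewrite hc; congr (_, _).
set y1 := sY x y; set x1 := finv (sY y1) x.
have e1 : dl x1 (sY x1 z) = dl x (sY x (sY y z)).
  by rewrite -hc -(inj_eq (sYinj y1)) /x1 f_finv.
have e2 : dl y1 (sY x (sY y z)) = dl y (sY y z).
  by rewrite /y1 (inj_eq (sYinj x)).
by rewrite e1 e2 -!addrA [dl x _ + _]addrC.
Qed.

Lemma gamX : (forall y, injective (fun x => finv (sY (sY x y)) x)) ->
  forall v, injective (fun t => finv (sL (sL t v)) t).
Proof.
move=> hg v [a x] [a' x'] /=; rewrite !finvX => h; move: (congr1 fst h) (congr1 snd h) => /= h1 h2.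
have e := hg _ _ _ h2; subst x'.
by rewrite (addIr _ h1).
Qed.

Definition phif (f : {ffun Y -> 'Z_q}) (g : {perm Y}) (t : X) : X := (t.1 + f (g t.2), g t.2).

Lemma phi_inj f g : injective (phif f g).
Proof.
case=> a x [a' x'] h; move: (congr1 fst h) (congr1 snd h) => /= h1 h2.
have e := perm_inj h2; subst x'.
by rewrite (addIr _ h1).
Qed.

Definition Phi f g : {perm X} := perm (phi_inj f g).

Lemma PhiE f g t : Phi f g t = (t.1 + f (g t.2), g t.2).
Proof. by rewrite permE. Qed.

Lemma PhiM f g f' g' : (Phi f g * Phi f' g')%g = Phi (pact g' f + f') (g * g')%g.
Proof.
apply/permP => t; rewrite permM !PhiE /= !ffunE permM permK.
by rewrite addrA.
Qed.

Lemma PhiV f g t : ((Phi f g)^-1)%g t = (t.1 - f t.2, (g^-1)%g t.2).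
Proof.
apply: (perm_inj (s := Phi f g)); rewrite permKV PhiE /= permKV subrK.
by case: t.
Qed.

Lemma Phi_inj f g f' g' : Phi f g = Phi f' g' -> f = f' /\ g = g'.
Proof.
move=> h.
have hg : g = g'.
  apply/permP => y; have := congr1 (fun p : {perm X} => (p (0, y)).2) h.
  by rewrite !PhiE.
subst g'; split=> //; apply/ffunP => y.
have := congr1 (fun p : {perm X} => (p (0, (g^-1)%g y)).1) h.
by rewrite !PhiE /= permKV !add0r.
Qed.

Lemma sigpX u : sigp (r_of sL) u = Phi [ffun y => ((ebasis u.2 y)%:~R : 'Z_q)] (sigp (r_of sY) u.2).
Proof.
apply/permP => t; rewrite (sigpE sXinj u t) PhiE (sigpE sYinj) sXE !ffunE.
by [].
Qed.


Definition pushf (a : {ffun X -> int}) : {ffun Y -> int} := [ffun y => \sum_c a (c, y)].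
Definition pmod (c : {ffun Y -> int}) : {ffun Y -> 'Z_q} := [ffun y => (c y)%:~R].

Lemma pushfD a b : pushf (a + b) = pushf a + pushf b.
Proof. by apply/ffunP => y; rewrite !ffunE -big_split /=; apply: eq_bigr => c _; rewrite ffunE. Qed.

Lemma pushfMn a n : pushf (a *+ n) = pushf a *+ n.
Proof. by apply/ffunP => y; rewrite ffunMnE !ffunE -sumrMnl; apply: eq_bigr => c _; rewrite ffunMnE. Qed.

Lemma pushf_e u : pushf (ebasis u) = ebasis u.2.
Proof.
apply/ffunP => y; rewrite !ffunE (bigD1 u.1) //= ffunE big1 ?addr0.
  by case: u => a x /=; rewrite xpair_eqE eqxx.
move=> c hc; rewrite ffunE; case: u hc => a x /= hc.
by rewrite xpair_eqE eq_sym (negPf hc).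
Qed.

Lemma pushf_pact f g b : pushf (pact (Phi f g) b) = pact g (pushf b).
Proof.
apply/ffunP => y; rewrite !ffunE.
rewrite (reindex_inj (addIr (f y))) /=.
apply: eq_bigr => c _; rewrite ffunE PhiV /=.
by rewrite addrK.
Qed.

Lemma pmodD c d : pmod (c + d) = pmod c + pmod d.
Proof. by apply/ffunP => y; rewrite !ffunE intrD. Qed.

Lemma pmod_pact g c : pmod (pact g c) = pact g (pmod c).
Proof. by apply/ffunP => y; rewrite !ffunE. Qed.

Lemma pmodMq c M : pmod (c *+ (q * M)) = 0.
Proof.
apply/ffunP => y; rewrite !ffunE ffunMnE rmorphMn mulrnA -[_ *+ q]mulr_natr pchar_Zp //.
by rewrite mulr0 mul0rn.
Qed.

Lemma pmod_e x : pmod (ebasis x) = [ffun y => ((ebasis x y)%:~R : 'Z_q)].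
Proof. by []. Qed.

Section LamY.
Variable lamY : {ffun Y -> int} -> {perm Y}.
Hypothesis hlY : is_lam (r_of sY) lamY.

Definition lamX (a : {ffun X -> int}) : {perm X} := Phi (pmod (pushf a)) (lamY (pushf a)).

Lemma is_lamX : is_lam (r_of sL) lamX.
Proof.
case: hlY => he hc; split.
  by move=> u; rewrite /lamX pushf_e he sigpX.
move=> a b; rewrite /lamX PhiM pushfD pushf_pact hc pmodD pmod_pact.
by rewrite addrC.
Qed.

Variable M : nat.
Hypothesis hpY : periodic lamY M.

Lemma periodicX : periodic lamX (q * M).
Proof.
move=> a b; rewrite /lamX pushfD pushfMn pmodD pmodMq addr0.
by rewrite mulrnA hpY.
Qed.

Definition addwd {T : finType} (lam : {ffun T -> int} -> {perm T}) :=
  forall a a' b, lam a = lam a' -> lam (a + b) = lam (a' + b).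

Hypothesis haY : addwd lamY.

Lemma addwdX : addwd lamX.
Proof.
move=> a a' b; rewrite /lamX => /Phi_inj [h1 h2].
by rewrite !pushfD !pmodD h1 (haY _ _ _ h2).
Qed.

Hypothesis hM : (0 < M)%N.
Hypothesis hcop : coprime q M.

Lemma GX_Phi g : g \in Gcal (r_of sL) ->
  exists f l, l \in Gcal (r_of sY) /\ g = Phi f l.
Proof.
move=> hg; have [a <-] := Gcal_lam is_lamX hg.
exists (pmod (pushf a)), (lamY (pushf a)); split=> //.
exact: (lam_in_G hlY hM hpY).
Qed.

Lemma Phi_GX f l : l \in Gcal (r_of sY) -> Phi f l \in Gcal (r_of sL).
Proof.
move=> hl; have [c hc] := Gcal_lam hlY hl.
have hu : ((M%:R : 'Z_q) \is a GRing.unit) by rewrite unitZpE.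
pose d : {ffun Y -> int} := [ffun y => Posz (nat_of_ord ((M%:R : 'Z_q)^-1 * (f y - (c y)%:~R)))].
pose c' := c + d *+ M.
pose a : {ffun X -> int} := [ffun t => if t.1 == 0 then c' t.2 else 0].
have pa : pushf a = c'.
  apply/ffunP => y; rewrite ffunE (bigD1 0) //= big1 ?addr0; first by rewrite ffunE eqxx.
  by move=> z hz; rewrite ffunE /= (negPf hz).
have pc : pmod c' = f.
  apply/ffunP => y; rewrite !ffunE ffunMnE intrD ffunE.
  set z := ((M%:R : 'Z_q)^-1 * (f y - (c y)%:~R)).
  have -> : (Posz (nat_of_ord z) *+ M) = Posz ((nat_of_ord z) * M)%N by lia.
  rewrite -[(Posz _)%:~R]/((_ * _)%:R) natrM natr_Zp /z.
  by rewrite mulrC mulrA mulrV // mul1r addrC subrK.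
have -> : Phi f l = lamX a by rewrite /lamX pa pc -hc /c' hpY.
apply: (lam_in_G is_lamX _ periodicX); rewrite muln_gt0 hM andbT; exact: ltnW hq.
Qed.

Lemma GX_card : #|Y| = M -> #|Gcal (r_of sL)| = (q ^ M * #|Gcal (r_of sY)|)%N.
Proof.
move=> hY.
have -> : Gcal (r_of sL) = [set Phi pr.1 pr.2 | pr in setX [set: {ffun Y -> 'Z_q}] (Gcal (r_of sY))] :> {set _}.
  apply/setP => g; apply/idP/imsetP.
    by case/GX_Phi => f [l [hl ->]]; exists (f, l) => //; rewrite inE /= in_setT.
  by case=> [[f l]]; rewrite inE /= => /andP [_ hl] ->; apply: Phi_GX.
rewrite card_in_imset; last first.
  by case=> f l [f' l'] _ _ /= /Phi_inj [-> ->].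
rewrite cardsX cardsT card_ffun hY card_ord Zp_cast //.
Qed.

End LamY.

Definition Fg (h : {perm X}) : {perm Y} := Defs.perm_of (fun y => (h (0, y)).2).
Definition FF (h : {perm X}) : {ffun Y -> 'Z_q} * {perm Y} :=
  ([ffun y => (h (0, ((Fg h)^-1)%g y)).1], Fg h).

Lemma FF_Phi f g : FF (Phi f g) = (f, g).
Proof.
have hg : Fg (Phi f g) = g.
  apply/permP => y; rewrite /Fg perm_ofE ?PhiE //.
  by move=> y1 y2; rewrite !PhiE /=; exact: perm_inj.
rewrite /FF hg; congr (_, _); apply/ffunP => y.
by rewrite ffunE PhiE /= permKV add0r.
Qed.

Lemma ret_relS (T : finType) (r : T * T -> T * T) k x y :
  ret_rel r k.+1 x y = [forall z, ret_rel r k (sig_of r x z) (sig_of r y z)].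
Proof. by []. Qed.

Lemma retX k u v : ret_rel (r_of sL) k.+1 u v = ret_rel (r_of sY) k u.2 v.2.
Proof.
elim: k u v => [|k IH] u v.
  rewrite /=; apply/forallP/eqP => [h|e z]; last by rewrite /sig_of /= !sXE e.
  pose w := finv (sY u.2) u.2.
  have := h (0, w); rewrite /sig_of /= !sXE /= => /eqP e.
  move: (congr1 fst e) (congr1 snd e) => /= e1 e2.
  rewrite /w f_finv // in e1 e2; rewrite -e2 eqxx in e1.
  case: eqP e1 => // _ /eqP; rewrite !add0r oner_eq0 //.
rewrite ret_relS [in RHS]ret_relS; apply/forallP/forallP => h z.
  by have := h (0, z); rewrite IH.
by rewrite IH; exact: (h z.2).
Qed.

Lemma ret_trivX (L : nat) (y0 : Y) :
  (forall k, ret_trivial (r_of sY) k <-> (L <= k)%N) ->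
  forall k, ret_trivial (r_of sL) k <-> (L.+1 <= k)%N.
Proof.
move=> hY [|k].
  split=> // h; have := h (0, y0) (1, y0); rewrite /= xpair_eqE eqxx andbT.
  by rewrite eq_sym oner_eq0.
rewrite ltnS -hY; split=> h x y.
  by have := h (0, x) (0, y); rewrite retX.
by rewrite retX; apply: h.
Qed.

Lemma ret_isoX : ret_iso_via (r_of sL) (r_of sY) (fun u => u.2).
Proof.
split.
- by move=> y; exists (0, y).
- move=> u v; have := retX 0 u v; rewrite /= => h; split.
    by move=> e z; rewrite /sig_of /= !sXE e.
  move=> e; apply/eqP; rewrite -h; apply/forallP => z; apply/eqP; exact: e.
- by move=> u v; rewrite /r_of /= finvX.
Qed.

Definition BI : Prop :=
  exists (lamX : {ffun X -> int} -> {perm X})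
         (lamY : {ffun Y -> int} -> {perm Y}),
  [/\ is_lam (r_of sL) lamX, is_lam (r_of sY) lamY &
  exists F : {perm X} -> {ffun Y -> 'Z_q} * {perm Y},
  [/\ {in Gcal (r_of sL) &, injective F},
      forall g, g \in Gcal (r_of sL) -> (F g).2 \in Gcal (r_of sY),
      forall i l, l \in Gcal (r_of sY) ->
        exists2 g, g \in Gcal (r_of sL) & F g = (i, l),
      {in Gcal (r_of sL) &, forall g h, F (h * g)%g = sd_mul (F g) (F h)}
    & forall a b c d, lamY c = (F (lamX a)).2 -> lamY d = (F (lamX b)).2 ->
        F (lamX (a + b)) = ((F (lamX a)).1 + (F (lamX b)).1, lamY (c + d))]].

Section LamY2.
Variable lamY : {ffun Y -> int} -> {perm Y}.
Hypothesis hlY : is_lam (r_of sY) lamY.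
Variable M : nat.
Hypothesis hpY : periodic lamY M.
Hypothesis haY : addwd lamY.
Hypothesis hM : (0 < M)%N.
Hypothesis hcop : coprime q M.

Lemma transX (y0 : Y) : [transitive Gcal (r_of sY), on [set: Y] | 'P] ->
  [transitive Gcal (r_of sL), on [set: X] | 'P].
Proof.
move=> /trans_get hY; apply: (trans_of (0, y0)) => t t'.
have [l hl e] := hY t.2 t'.2.
exists (Phi [ffun _ => t'.1 - t.1] l); first exact: (Phi_GX _ hlY _ hpY hM hcop).
rewrite PhiE ffunE e addrC subrK.
by case: t' e.
Qed.

Lemma BIX : BI.
Proof.
exists (lamX lamY), lamY; split=> //; first exact: is_lamX.
exists FF; split.
- move=> g h /(GX_Phi _ hlY _ hpY hM) [f [l [_ ->]]] /(GX_Phi _ hlY _ hpY hM) [f' [l' [_ ->]]].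
  by rewrite !FF_Phi => [[-> ->]].
- by move=> g /(GX_Phi _ hlY _ hpY hM) [f [l [hl ->]]]; rewrite FF_Phi.
- move=> i l hl; exists (Phi i l); last by rewrite FF_Phi.
  exact: (Phi_GX _ hlY _ hpY hM hcop).
- move=> g h /(GX_Phi _ hlY _ hpY hM) [f [l [_ ->]]] /(GX_Phi _ hlY _ hpY hM) [f' [l' [_ ->]]].
  by rewrite PhiM !FF_Phi /sd_mul /= addrC.
- move=> a b c d; rewrite /lamX !FF_Phi /= => hc hd.
  rewrite pushfD pmodD; congr (_, _).
  rewrite (haY _ _ _ (esym hc)) addrC (haY _ _ _ (esym hd)) addrC //.
Qed.

End LamY2.

End Layer.

Record Good {Y : finType} (sY : Y -> Y -> Y) (M G L : nat) : Prop := {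
  g_inj : forall x, injective (sY x);
  g_cyc : cyc sY;
  g_gam : forall y, injective (fun x => finv (sY (sY x y)) x);
  g_card : #|Y| = M;
  g_pos : (0 < M)%N;
  g_trans : [transitive Gcal (r_of sY), on [set: Y] | 'P];
  g_gcard : #|Gcal (r_of sY)| = G;
  g_lam : exists lam, [/\ is_lam (r_of sY) lam, periodic lam M & addwd lam];
  g_ret : forall k, ret_trivial (r_of sY) k <-> (L <= k)%N }.

Arguments g_inj {Y sY M G L}.
Arguments g_cyc {Y sY M G L}.
Arguments g_gam {Y sY M G L}.
Arguments g_card {Y sY M G L}.
Arguments g_pos {Y sY M G L}.
Arguments g_trans {Y sY M G L}.
Arguments g_gcard {Y sY M G L}.
Arguments g_lam {Y sY M G L}.
Arguments g_ret {Y sY M G L}.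

Lemma ret_rel_refl (T : finType) (r : T * T -> T * T) k x : ret_rel r k x x.
Proof. elim: k x => [|k IH] x /=; first exact: eqxx. by apply/forallP => z. Qed.

Lemma good_layer (Y : finType) (sY : Y -> Y -> Y) (M G L q : nat) :
  Good sY M G L -> (1 < q)%N -> coprime q M ->
  Good (@sX Y sY q) (q * M) (q ^ M * G) L.+1.
Proof.
case=> hi hc hg hcard hM htr hG [lam [hl hp ha]] hr hq hcop.
have [y0 _] : exists y0, y0 \in [set: Y].
  by apply/card_gt0P; rewrite cardsT hcard.
split.
- exact: (sXinj _ _ _ hi).
- exact: (cycX _ _ _ hi hc).
- exact: (gamX _ _ _ hi hg).
- by rewrite card_prod card_ord Zp_cast // hcard.
- by rewrite muln_gt0 hM andbT ltnW.
- exact: (transX _ _ _ hq hi _ hl _ hp hM hcop y0 htr).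
- by rewrite (GX_card _ _ _ hq hi _ hl _ hp hM hcop hcard) hG.
- exists (lamX _ _ lam); split.
  + exact: (is_lamX _ _ _ hi _ hl).
  + exact: (periodicX _ _ hq _ _ hp).
  + exact: (addwdX _ _ _ ha).
- exact: (ret_trivX _ _ _ hi _ y0 hr).
Qed.

Section Base.
Local Open Scope ring_scope.
Variable q : nat.
Hypothesis hq : (1 < q)%N.

Definition s1 (x y : 'Z_q) : 'Z_q := y + 1.

Lemma s1inj x : injective (s1 x).
Proof. exact: addIr. Qed.

Definition shiftp (c : 'Z_q) : {perm 'Z_q} := perm (addIr c).
Lemma shiftE c y : shiftp c y = y + c.
Proof. by rewrite permE. Qed.

Definition lam1 (a : {ffun 'Z_q -> int}) : {perm 'Z_q} := shiftp ((\sum_y a y)%:~R).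

Lemma sum_pact (g : {perm 'Z_q}) (b : {ffun 'Z_q -> int}) : \sum_y pact g b y = \sum_y b y.
Proof.
rewrite (reindex_inj (@perm_inj _ g)); apply: eq_bigr => y _.
by rewrite ffunE permK.
Qed.

Lemma is_lam1 : is_lam (r_of s1) lam1.
Proof.
split.
  move=> x; apply/permP => y; rewrite shiftE (sigpE s1inj).
  rewrite (bigD1 x) //= big1 ?addr0; first by rewrite ffunE eqxx.
  by move=> z hz; rewrite ffunE eq_sym (negPf hz).
move=> a b; apply/permP => y; rewrite permM !shiftE.
rewrite (eq_bigr (fun y => a y + pact (lam1 a) b y)); last by move=> z _; rewrite ffunE.
rewrite big_split /= sum_pact intrD -addrA; congr (_ + _); exact: addrC.
Qed.

Lemma periodic1 : periodic lam1 q.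
Proof.
move=> a b; rewrite /lam1.
rewrite (eq_bigr (fun y => a y + b y *+ q)); last by move=> z _; rewrite ffunE ffunMnE.
rewrite big_split /= sumrMnl intrD rmorphMn -[_ *+ q]mulr_natr pchar_Zp //.
by rewrite mulr0 addr0.
Qed.

Lemma addwd1 : addwd lam1.
Proof.
move=> a a' b h; have := congr1 (fun g : {perm 'Z_q} => g 0) h; rewrite !shiftE !add0r => e.
rewrite /lam1 (eq_bigr (fun y => a y + b y)); last by move=> z _; rewrite ffunE.
rewrite [in RHS](eq_bigr (fun y => a' y + b y)); last by move=> z _; rewrite ffunE.
by rewrite !big_split /= !intrD e.
Qed.

Lemma G1_shift g : g \in Gcal (r_of s1) <-> exists c, g = shiftp c.
Proof.
rewrite (lam_in_Gcal is_lam1 _ (ltnW hq) periodic1); split.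
  by move=> [a <-]; eexists.
move=> [c ->]; exists [ffun z => if z == 0 then Posz (nat_of_ord c) else 0].
rewrite /lam1 (bigD1 0) //= big1 ?addr0; first by rewrite ffunE eqxx -[(Posz _)%:~R]/((nat_of_ord c)%:R) natr_Zp.
by move=> z hz; rewrite ffunE (negPf hz).
Qed.

Lemma good_base : Good s1 q q 1.
Proof.
split.
- exact: s1inj.
- by [].
- move=> y a b h.
  by rewrite -(f_finv (s1inj (s1 a y)) a) -(f_finv (s1inj (s1 b y)) b) h.
- by rewrite card_ord Zp_cast.
- exact: ltnW.
- apply: (trans_of 0) => x y; exists (shiftp (y - x)).
    by apply/G1_shift; eexists.
  by rewrite shiftE addrC subrK.
- have -> : Gcal (r_of s1) = [set shiftp c | c in 'Z_q] :> {set _}.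
    apply/setP => g; apply/idP/imsetP.
      by move/G1_shift => [c ->]; exists c.
    by move=> [c _ ->]; apply/G1_shift; exists c.
  rewrite card_in_imset ?card_ord ?Zp_cast //.
  move=> c c' _ _ h; have := congr1 (fun g : {perm 'Z_q} => g 0) h.
  by rewrite !shiftE !add0r.
- exists lam1; split.
  + exact: is_lam1.
  + exact: periodic1.
  + exact: addwd1.
- case=> [|k].
    split=> // h; have := h 0 1; rewrite /= eq_sym oner_eq0 //.
  split=> // _ x y; rewrite ret_relS; apply/forallP => z.
  exact: ret_rel_refl.
Qed.

End Base.

Lemma coprime_layer (n : nat) (p : nat -> nat) :
  (forall i, (1 <= i <= n)%N -> prime (p i)) ->
  (forall i k, (1 <= i <= n)%N -> (1 <= k <= n)%N -> p i = p k -> i = k) ->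
  forall k, (k.+2 <= n)%N -> coprime (p k.+2) (\prod_(1 <= i < k.+2) p i).
Proof.
move=> hpr hd k hk.
  rewrite big_nat; apply: (@big_ind _ (fun x => coprime (p k.+2) x)); first exact: coprimen1.
    by move=> x y hx hy; rewrite coprimeMr hx hy.
  move=> i /andP [hi1 hi2].
  have hin : (1 <= i <= n)%N by rewrite hi1 /=; lia.
  have hkn : (1 <= k.+2 <= n)%N by rewrite hk.
  rewrite prime_coprime ?hpr // dvdn_prime2 ?hpr //.
  apply/eqP => e; have := hd _ _ hkn hin e; lia.
Qed.

Lemma good_all (n : nat) (p : nat -> nat) :
  (forall i, (1 <= i <= n)%N -> prime (p i)) ->
  (forall i k, (1 <= i <= n)%N -> (1 <= k <= n)%N -> p i = p k -> i = k) ->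
  forall k, (k.+1 <= n)%N ->
  Good (sig p k.+1) (\prod_(1 <= i < k.+2) p i)%N
       (p 1 * \prod_(2 <= i < k.+2) p i ^ (\prod_(1 <= l < i) p l))%N k.+1.
Proof.
move=> hpr hd; elim=> [|k IH] hk.
  rewrite big_nat1 big_geq // muln1.
  apply: (good_base (p 1)).
  by apply: prime_gt1; apply: hpr; rewrite leqnn.
have G1 := IH (ltnW hk).
have hq : (1 < p k.+2)%N by apply: prime_gt1; apply: hpr; rewrite hk.
have hcop := @coprime_layer n p hpr hd k hk.
have H := @good_layer _ _ _ _ _ _ G1 hq hcop.
have e1 : (p k.+2 * \prod_(1 <= i < k.+2) p i = \prod_(1 <= i < k.+3) p i)%N.
  by rewrite [in RHS]big_nat_recr // mulnC.
have e2 : (p k.+2 ^ (\prod_(1 <= i < k.+2) p i) *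
           (p 1 * \prod_(2 <= i < k.+2) p i ^ (\prod_(1 <= l < i) p l)) =
           p 1 * \prod_(2 <= i < k.+3) p i ^ (\prod_(1 <= l < i) p l))%N.
  by rewrite [in RHS]big_nat_recr // mulnCA [X in (_ * X)%N]mulnC.
rewrite e1 e2 in H.
exact: H.
Qed.

Theorem mainTheorem9 (n : nat) (p : nat -> nat) :
  (1 <= n)%N ->
  (forall i, (1 <= i <= n)%N -> prime (p i)) ->
  (forall i k, (1 <= i <= n)%N -> (1 <= k <= n)%N -> p i = p k -> i = k) ->
  (forall k, (k.+2 <= n)%N ->
     [/\ is_solution (rX p k.+2),
         indecomposable (rX p k.+2),
         #|Xt p k.+2| = (\prod_(1 <= i < k.+3) p i)%N,
         ret_iso_via (rX p k.+2) (rX p k.+1) (proj p k)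
       & brace_iso_sd p k]) /\
  [/\ is_solution (rX p n) /\ indecomposable (rX p n),
      multiperm (rX p n),
      #|Xt p n| = (\prod_(1 <= i < n.+1) p i)%N,
      mp_level (rX p n) n
    & #|Gcal (rX p n)| = (p 1 * \prod_(2 <= i < n.+1) p i ^ (\prod_(1 <= l < i) p l))%N].
Proof.
move=> hn hpr hd; have good := @good_all n p hpr hd.
split.
  move=> k hk.
  have G1 := good k (ltnW hk).
  have G2 := good k.+1 hk.
  have hq : (1 < p k.+2)%N by apply: prime_gt1; apply: hpr; rewrite hk.
  have hcop := @coprime_layer n p hpr hd k hk.
  split.
  - exact: (is_solution_of (g_inj G2) (g_cyc G2) (g_gam G2)).
  - exact: (g_trans G2).
  - exact: (g_card G2).
  - exact: (ret_isoX _ _ _ (g_inj G1)).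
  - have [lam [hl hp ha]] := g_lam G1.
    exact: (BIX _ _ _ hq (g_inj G1) _ hl _ hp ha (g_pos G1) hcop).
case: n hn hpr hd good => // n' _ hpr hd good.
have G := good n' (leqnn _).
split.
- split; [exact: (is_solution_of (g_inj G) (g_cyc G) (g_gam G)) | exact: (g_trans G)].
- by exists n'.+1; apply/(g_ret G).
- exact: (g_card G).
- split; first by apply/(g_ret G).
  by move=> k hk /(g_ret G); rewrite leqNgt hk.
- exact: (g_gcard G).
Qed.
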